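(* Let $d>0$, $\alpha\in\mathbb R$, $p\in C^1([a,b])$, and let $(\lambda_1,\Phi_1)$ be the principal eigenpair of $$(d\Phi_x-\alpha\Phi)_x+(p(x)+\lambda)\Phi=0,\ a<x<b;\qquad d\Phi_x-\alpha\Phi=0\ \text{at }x=a,b,$$ with $\Phi_1>0$ on $[a,b]$. Then: (a) if $p_x\le0$ on $[a,b]$ and $p_x\not\equiv0$, then $d\,(\Phi_1)_x<\alpha\Phi_1$ in $(a,b)$; (b) if $p_x\ge0$ on $[a,b]$ and $p_x\not\equiv0$, then $d\,(\Phi_1)_x>\alpha\Phi_1$ in $(a,b)$.
   Context: The principal eigenvalue $\lambda_1$ is the smallest eigenvalue; it is simple and its eigenfunction can be chosen strictly positive. *)

(* Defs.v *)
From Stdlib Require Import Reals.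
From Coquelicot Require Import Coquelicot.
Open Scope R_scope.

Definition deriv_on (a b : R) (f f' : R -> R) : Prop :=
  forall x, a <= x <= b ->
    filterlim (fun y => (f y - f x) / (y - x))
      (within (fun y => a <= y <= b /\ y <> x) (locally x)) (locally (f' x)).

Definition cont_on (a b : R) (f : R -> R) : Prop :=
  forall x, a <= x <= b ->
    filterlim f (within (fun y => a <= y <= b) (locally x)) (locally (f x)).

Definition C1_on (a b : R) (p p' : R -> R) : Prop :=
  deriv_on a b p p' /\ cont_on a b p'.

Definition eigenpair (d alpha : R) (p : R -> R) (a b : R)
    (lam : R) (Phi : R -> R) : Prop :=
  exists Phi' Phi'' : R -> R,
    deriv_on a b Phi Phi' /\ deriv_on a b Phi' Phi'' /\ cont_on a b Phi'' /\
    (forall x, a < x < b ->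
        d * Phi'' x - alpha * Phi' x + (p x + lam) * Phi x = 0) /\
    d * Phi' a - alpha * Phi a = 0 /\
    d * Phi' b - alpha * Phi b = 0 /\
    (exists x, a <= x <= b /\ Phi x <> 0).

Definition principal_eigenpair (d alpha : R) (p : R -> R) (a b : R)
    (lam1 : R) (Phi1 : R -> R) : Prop :=
  eigenpair d alpha p a b lam1 Phi1 /\
  (forall lam Phi, eigenpair d alpha p a b lam Phi -> lam1 <= lam) /\
  (forall x, a <= x <= b -> 0 < Phi1 x).

(* Main.v *)
Require Import Defs.
From Stdlib Require Import Reals Lra Classical.
From Coquelicot Require Import Coquelicot.
Open Scope R_scope.

Lemma within_eps (P : R -> Prop) (g : R -> R) x l :
  filterlim g (within P (locally x)) (locally l) ->
  forall eps, 0 < eps -> exists del, 0 < del /\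
    forall y, P y -> Rabs (y - x) < del -> Rabs (g y - l) < eps.
Proof.
  intros H eps Heps.
  destruct (proj1 (filterlim_locally g l) H (mkposreal eps Heps)) as [del Hd].
  exists del; split; [apply cond_pos|].
  intros y Py Hy. apply (Hd y); [exact Hy|exact Py].
Qed.

Lemma deriv_interior a b f f' x :
  deriv_on a b f f' -> a < x < b -> is_derive f x (f' x).
Proof.
  intros H Hx. apply is_derive_Reals.
  intros eps Heps.
  destruct (within_eps _ _ _ _ (H x ltac:(lra)) eps Heps) as [del [Hdel Hd]].
  assert (Hp : 0 < Rmin del (Rmin (x - a) (b - x))).
  { repeat apply Rmin_pos; lra. }
  exists (mkposreal _ Hp). intros h Hh Hha. simpl in Hha.
  assert (H1 := Rmin_l del (Rmin (x - a) (b - x))).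
  assert (H2 := Rmin_r del (Rmin (x - a) (b - x))).
  assert (H3 := Rmin_l (x - a) (b - x)).
  assert (H4 := Rmin_r (x - a) (b - x)).
  assert (Hh' := Rle_abs h). assert (Hh'' := Rle_abs (-h)). rewrite Rabs_Ropp in Hh''.
  specialize (Hd (x + h)).
  replace (x + h - x) with h in Hd by ring.
  apply Hd; [split; [lra|] | lra].
  intro E; apply Hh; lra.
Qed.

Definition ceps a b f := forall x, a <= x <= b -> forall eps, 0 < eps ->
  exists del, 0 < del /\ forall y, a <= y <= b -> Rabs (y - x) < del -> Rabs (f y - f x) < eps.

Lemma cont_ceps a b f : cont_on a b f -> ceps a b f.
Proof.
  intros H x Hx eps Heps. exact (within_eps _ _ _ _ (H x Hx) eps Heps).
Qed.

Lemma deriv_ceps a b f f' : deriv_on a b f f' -> ceps a b f.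
Proof.
  intros H x Hx eps Heps.
  destruct (within_eps _ _ _ _ (H x Hx) 1 Rlt_0_1) as [d1 [Hd1 Hd]].
  set (M := 1 + Rabs (f' x)).
  assert (HM : 0 < M) by (unfold M; assert (H0 := Rabs_pos (f' x)); lra).
  exists (Rmin d1 (eps / M)); split.
  { apply Rmin_pos; [lra| apply Rdiv_lt_0_compat; lra]. }
  intros y Hy Hyx.
  assert (H1 := Rmin_l d1 (eps / M)).
  assert (H2 := Rmin_r d1 (eps / M)).
  destruct (Req_dec y x) as [E|E].
  { subst. replace (f x - f x) with 0 by ring. rewrite Rabs_R0. lra. }
  specialize (Hd y (conj Hy E) ltac:(lra)).
  set (q := (f y - f x) / (y - x)) in *.
  assert (Hq : f y - f x = q * (y - x)).
  { unfold q. field. lra. }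
  rewrite Hq, Rabs_mult.
  assert (Hqb : Rabs q < M).
  { unfold M. assert (T := Rabs_triang (q - f' x) (f' x)).
    replace (q - f' x + f' x) with q in T by ring. lra. }
  assert (Hyb : Rabs (y - x) < eps / M) by lra.
  assert (Ha := Rabs_pos q). assert (Hb := Rabs_pos (y - x)).
  apply Rle_lt_trans with (M * Rabs (y - x)).
  { apply Rmult_le_compat_r; lra. }
  replace eps with (M * (eps / M)) by (field; lra).
  apply Rmult_lt_compat_l; lra.
Qed.

Definition clamp a b t := Rmax a (Rmin b t).

Lemma clamp_in a b t : a <= b -> a <= clamp a b t <= b.
Proof. intros. unfold clamp, Rmax, Rmin; repeat destruct Rle_dec; lra. Qed.

Lemma clamp_id a b t : a <= t <= b -> clamp a b t = t.
Proof. intros. unfold clamp, Rmax, Rmin; repeat destruct Rle_dec; lra. Qed.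

Lemma clamp_lip a b y t : a <= b -> Rabs (clamp a b y - clamp a b t) <= Rabs (y - t).
Proof.
  intros. unfold clamp, Rmax, Rmin; repeat destruct Rle_dec;
  unfold Rabs; repeat destruct Rcase_abs; lra.
Qed.

Lemma ceps_clamp a b f : a <= b -> ceps a b f -> forall t, continuity_pt (fun y => f (clamp a b y)) t.
Proof.
  intros Hab H t eps Heps.
  destruct (H (clamp a b t) (clamp_in a b t Hab) eps Heps) as [del [Hdel Hd]].
  exists del; split; [lra|].
  intros y [_ Hy]. unfold R_dist in *. simpl.
  apply Hd; [apply clamp_in; lra|].
  eapply Rle_lt_trans; [apply clamp_lip; lra| exact Hy].
Qed.

Lemma my_MVT f df a b : a < b ->
  (forall c, a < c < b -> is_derive f c (df c)) ->
  (forall c, a <= c <= b -> continuity_pt f c) ->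
  exists c, a < c < b /\ f b - f a = df c * (b - a).
Proof.
  intros Hab Hd Hc.
  set (pr1 := fun c (P : a < c < b) =>
     exist (fun l => derivable_pt_abs f c l) (df c) (proj1 (is_derive_Reals _ _ _) (Hd c P))).
  destruct (MVT f id a b pr1 (fun c _ => derivable_pt_id c) Hab Hc
              (fun c _ => derivable_continuous_pt _ _ (derivable_pt_id c))) as [c [P E]].
  exists c; split; [exact P|].
  simpl in E. rewrite derive_pt_id in E. unfold id in E. lra.
Qed.

Lemma fermat f l a b c : is_derive f c l -> a < c < b ->
  (forall x, a < x < b -> f x <= f c) -> l = 0.
Proof.
  intros Hd Hc Hm.
  pose (pr := exist (fun l0 => derivable_pt_abs f c l0) l (proj1 (is_derive_Reals _ _ _) Hd)).
  assert (T := deriv_maximum f a b c pr ltac:(lra) ltac:(lra) (fun x h1 h2 => Hm x (conj h1 h2))).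
  exact T.
Qed.

Lemma is_derive_cont f c l : is_derive f c l -> continuity_pt f c.
Proof.
  intros H. apply continuity_pt_filterlim. apply (ex_derive_continuous (K:=R_AbsRing) (V:=R_NormedModule)). exists l; exact H.
Qed.

Lemma locally_const_zero K x1 a b : a < x1 < b ->
  (forall t, a < t < b -> K t = 0) -> locally x1 (fun t => (fun _ => 0) t = K t).
Proof.
  intros Hx HK.
  assert (Hp : 0 < Rmin (x1 - a) (b - x1)) by (apply Rmin_pos; lra).
  exists (mkposreal _ Hp). intros y Hy. simpl in Hy.
  change (Rabs (y - x1) < Rmin (x1 - a) (b - x1)) in Hy.
  assert (H3 := Rmin_l (x1 - a) (b - x1)).
  assert (H4 := Rmin_r (x1 - a) (b - x1)).
  rewrite HK; [reflexivity|].
  unfold Rabs in Hy; destruct Rcase_abs in Hy; lra.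
Qed.

Lemma lemmaA a b (z K z' K' E : R -> R) :
  a < b ->
  (forall t, a <= t <= b -> continuity_pt z t) ->
  (forall t, a < t < b -> is_derive z t (z' t)) ->
  (forall t, a < t < b -> is_derive K t (K' t)) ->
  (forall t, a < t < b -> z' t = E t * K t) ->
  (forall t, a < t < b -> 0 < E t) ->
  z a = 0 -> z b = 0 ->
  (forall t, a < t < b -> 0 <= K' t) ->
  (exists x1, a < x1 < b /\ 0 < K' x1) ->
  forall x, a < x < b -> z x < 0.
Proof.
  intros Hab Hzc Hzd HKd HzK HE Hza Hzb HK' [x1 [Hx1 Hx1']].
  assert (Kmono : forall x y, a < x -> x <= y -> y < b -> K x <= K y).
  { intros x y H1 H2 H3. destruct (Req_dec x y) as [->|Hne]; [lra|].
    destruct (my_MVT K K' x y ltac:(lra)) as [c [Hc Ec]].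
    - intros c Hc; apply HKd; lra.
    - intros c Hc; apply (is_derive_cont _ _ (K' c)); apply HKd; lra.
    - assert (0 <= K' c) by (apply HK'; lra). nra. }
  assert (zdec : forall u v, a <= u -> u < v -> v <= b ->
            (forall c, u < c < v -> K c <= 0) -> z v <= z u).
  { intros u v H1 H2 H3 HKc.
    destruct (my_MVT z z' u v H2) as [c [Hc Ec]].
    - intros c Hc; apply Hzd; lra.
    - intros c Hc; apply Hzc; lra.
    - rewrite HzK in Ec by lra. assert (0 < E c) by (apply HE; lra).
      assert (K c <= 0) by (apply HKc; lra).
      assert (E c * K c <= 0) by nra. nra. }
  assert (zinc : forall u v, a <= u -> u < v -> v <= b ->
            (forall c, u < c < v -> 0 <= K c) -> z u <= z v).
  { intros u v H1 H2 H3 HKc.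
    destruct (my_MVT z z' u v H2) as [c [Hc Ec]].
    - intros c Hc; apply Hzd; lra.
    - intros c Hc; apply Hzc; lra.
    - rewrite HzK in Ec by lra. assert (0 < E c) by (apply HE; lra).
      assert (0 <= K c) by (apply HKc; lra).
      assert (0 <= E c * K c) by nra. nra. }
  assert (zle : forall x, a < x < b -> z x <= 0).
  { intros x Hx. destruct (Rle_dec (K x) 0) as [Hk|Hk].
    - rewrite <- Hza. apply zdec; try lra.
      intros c Hc. apply Rle_trans with (K x); [apply Kmono|]; lra.
    - rewrite <- Hzb. apply zinc; try lra.
      intros c Hc. apply Rle_trans with (K x); [lra|apply Kmono]; lra. }
  intros x0 Hx0. destruct (Rlt_dec (z x0) 0) as [h|h]; [exact h|exfalso].
  assert (Hz0 : z x0 = 0) by (specialize (zle x0 Hx0); lra).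
  assert (Hd0 : z' x0 = 0).
  { apply (fermat z _ a b x0 (Hzd x0 Hx0) Hx0). intros; rewrite Hz0; apply zle; lra. }
  assert (HK0 : K x0 = 0).
  { rewrite HzK in Hd0 by lra. assert (0 < E x0) by (apply HE; lra).
    destruct (Rmult_integral _ _ Hd0); lra. }
  assert (zzero : forall t, a < t < b -> z t = 0).
  { intros t Ht. destruct (Rtotal_order t x0) as [Hl|[->|Hl]]; [|exact Hz0|].
    - assert (z x0 <= z t).
      { apply zdec; try lra. intros c Hc. rewrite <- HK0. apply Kmono; lra. }
      specialize (zle t Ht); lra.
    - assert (z x0 <= z t).
      { apply zinc; try lra. intros c Hc. rewrite <- HK0. apply Kmono; lra. }
      specialize (zle t Ht); lra. }
  assert (Kzero : forall t, a < t < b -> K t = 0).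
  { intros t Ht.
    assert (z' t = 0).
    { apply (fermat z _ a b t (Hzd t Ht) Ht). intros; rewrite (zzero t Ht), zzero; lra. }
    rewrite HzK in H by lra. assert (0 < E t) by (apply HE; lra).
    destruct (Rmult_integral _ _ H); lra. }
  assert (Hc : is_derive (fun _ => 0) x1 0) by (auto_derive; [exact I|ring]).
  assert (Hc' := is_derive_ext_loc _ _ _ _ (locally_const_zero K x1 a b Hx1 Kzero) Hc).
  assert (U := is_derive_unique _ _ _ Hc').
  rewrite (is_derive_unique _ _ _ (HKd x1 Hx1)) in U. lra.
Qed.

Lemma cont_zero_ext a b g : a < b -> ceps a b g ->
  (forall t, a < t < b -> g t = 0) -> forall t, a <= t <= b -> g t = 0.
Proof.
  intros Hab Hg Hz t Ht.
  destruct (Req_dec (g t) 0) as [h|h]; [exact h|exfalso].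
  assert (He : 0 < Rabs (g t)) by (apply Rabs_pos_lt; exact h).
  destruct (Hg t Ht _ He) as [del [Hdel Hd]].
  set (s := Rmin (1/2) (del / (2 * (b - a)))).
  assert (Hs1 := Rmin_l (1/2) (del / (2 * (b - a)))).
  assert (Hs2 := Rmin_r (1/2) (del / (2 * (b - a)))).
  assert (Hs0 : 0 < s) by (apply Rmin_pos; [lra| apply Rdiv_lt_0_compat; lra]).
  fold s in Hs1, Hs2.
  set (y := t + s * ((a + b) / 2 - t)).
  assert (Hy1 : a < y) by (unfold y; nra).
  assert (Hy2 : y < b) by (unfold y; nra).
  assert (Hsd : s * (b - a) <= del / 2).
  { apply Rle_trans with (del / (2 * (b - a)) * (b - a)).
    - apply Rmult_le_compat_r; lra.
    - right. field. lra. }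
  assert (Hyt : Rabs (y - t) < del).
  { unfold y. replace (t + s * ((a + b) / 2 - t) - t) with (s * ((a + b) / 2 - t)) by ring.
    rewrite Rabs_mult, (Rabs_pos_eq s) by lra.
    assert (Rabs ((a + b) / 2 - t) <= b - a) by (unfold Rabs; destruct Rcase_abs; lra).
    nra. }
  specialize (Hd y ltac:(lra) Hyt). rewrite (Hz y ltac:(lra)) in Hd.
  replace (0 - g t) with (- g t) in Hd by ring. rewrite Rabs_Ropp in Hd. lra.
Qed.

Theorem lemma5p1 (a b d alpha : R) (p p' : R -> R) (lam1 : R) (Phi1 : R -> R) :
  a < b -> 0 < d -> C1_on a b p p' ->
  principal_eigenpair d alpha p a b lam1 Phi1 ->
  ((forall x, a <= x <= b -> p' x <= 0) ->
   (exists x, a <= x <= b /\ p' x <> 0) ->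
   forall x, a < x < b -> d * Derive Phi1 x < alpha * Phi1 x) /\
  ((forall x, a <= x <= b -> 0 <= p' x) ->
   (exists x, a <= x <= b /\ p' x <> 0) ->
   forall x, a < x < b -> d * Derive Phi1 x > alpha * Phi1 x).
Proof.
  intros Hab Hd [Hp Hpc] [[F [G [HF [HG [HGc [Hode [Hba [Hbb _]]]]]]]] [_ Hpos]].
  set (c := clamp a b).
  set (zc := fun t => (d * F (c t) - alpha * Phi1 (c t)) / Phi1 (c t)).
  set (K := fun t => exp (-(alpha/d)*t) * (-(p t + lam1) * Phi1 t ^2 - d * F t ^ 2 + alpha * Phi1 t * F t)).
  set (Kd := fun t => - exp (-(alpha/d)*t) * p' t * Phi1 t ^2).
  set (zd := fun t => ((d * G t - alpha * F t) * Phi1 t - (d * F t - alpha * Phi1 t) * F t) / Phi1 t ^ 2).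
  set (E := fun t => exp ((alpha/d)*t) / Phi1 t ^ 2).
  assert (HcP : forall t, 0 < Phi1 (c t)) by (intro t; apply Hpos; apply clamp_in; lra).
  assert (Hzc : forall t, continuity_pt zc t).
  { intro t. unfold zc.
    apply (continuity_pt_div (fun t => d * F (c t) - alpha * Phi1 (c t)) (fun t => Phi1 (c t))).
    - apply (continuity_pt_minus (fun t => d * F (c t)) (fun t => alpha * Phi1 (c t))).
      + apply (continuity_pt_scal (fun t => F (c t))). apply ceps_clamp; [lra|]. eapply deriv_ceps; exact HG.
      + apply (continuity_pt_scal (fun t => Phi1 (c t))). apply ceps_clamp; [lra|]. eapply deriv_ceps; exact HF.
    - apply ceps_clamp; [lra|]. eapply deriv_ceps; exact HF.
    - specialize (HcP t); lra. }
  assert (HPd : forall t, a < t < b -> is_derive Phi1 t (F t)) by (intros; eapply deriv_interior; eauto).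
  assert (HFd : forall t, a < t < b -> is_derive F t (G t)) by (intros; eapply deriv_interior; eauto).
  assert (Hpd : forall t, a < t < b -> is_derive p t (p' t)) by (intros; eapply deriv_interior; eauto).
  assert (HGt : forall t, a < t < b -> G t = (alpha * F t - (p t + lam1) * Phi1 t) / d).
  { intros t Ht. specialize (Hode t Ht). field_simplify_eq; lra. }
  assert (Hzd : forall t, a < t < b -> is_derive zc t (zd t)).
  { intros t Ht.
    assert (Hloc : locally t (fun y => (fun y => (d * F y - alpha * Phi1 y) / Phi1 y) y = zc y)).
    { assert (Hq : 0 < Rmin (t - a) (b - t)) by (apply Rmin_pos; lra).
      exists (mkposreal _ Hq). intros y Hy. simpl in Hy.
      change (Rabs (y - t) < Rmin (t - a) (b - t)) in Hy.
      assert (H3 := Rmin_l (t - a) (b - t)). assert (H4 := Rmin_r (t - a) (b - t)).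
      unfold zc, c. rewrite clamp_id; [reflexivity|].
      unfold Rabs in Hy; destruct Rcase_abs in Hy; lra. }
    apply (is_derive_ext_loc _ _ _ _ Hloc).
    assert (P0 : 0 < Phi1 t) by (apply Hpos; lra).
    auto_derive.
    - repeat split; try (eexists; eauto); lra.
    - replace (Derive (fun x => Phi1 x) t) with (F t) by (symmetry; apply is_derive_unique; exact (HPd t Ht)).
      replace (Derive (fun x => F x) t) with (G t) by (symmetry; apply is_derive_unique; exact (HFd t Ht)).
      unfold zd. field. lra. }
  assert (HKd : forall t, a < t < b -> is_derive K t (Kd t)).
  { intros t Ht. unfold K. auto_derive.
    - repeat split; eexists; eauto.
    - replace (Derive (fun x => Phi1 x) t) with (F t) by (symmetry; apply is_derive_unique; exact (HPd t Ht)).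
      replace (Derive (fun x => F x) t) with (G t) by (symmetry; apply is_derive_unique; exact (HFd t Ht)).
      replace (Derive (fun x => p x) t) with (p' t) by (symmetry; apply is_derive_unique; exact (Hpd t Ht)).
      rewrite (HGt t Ht).
      unfold Kd. field. lra. }
  assert (HzK : forall t, a < t < b -> zd t = E t * K t).
  { intros t Ht. assert (P0 : 0 < Phi1 t) by (apply Hpos; lra).
    assert (Hex : exp (alpha / d * t) * exp (- (alpha / d) * t) = 1).
    { rewrite <- exp_plus. replace (alpha / d * t + - (alpha / d) * t) with 0 by ring. apply exp_0. }
    unfold zd, E, K. rewrite (HGt t Ht).
    transitivity ((exp (alpha / d * t) * exp (- (alpha / d) * t)) *
      ((-(p t + lam1) * Phi1 t ^2 - d * F t ^ 2 + alpha * Phi1 t * F t) / Phi1 t ^ 2)).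
    - rewrite Hex. field. lra.
    - field. lra. }
  assert (HE : forall t, a < t < b -> 0 < E t).
  { intros t Ht. unfold E. assert (0 < Phi1 t) by (apply Hpos; lra).
    apply Rdiv_lt_0_compat; [apply exp_pos| nra]. }
  assert (Hza : zc a = 0).
  { unfold zc, c. rewrite clamp_id by lra. rewrite Hba. unfold Rdiv. ring. }
  assert (Hzb : zc b = 0).
  { unfold zc, c. rewrite clamp_id by lra. rewrite Hbb. unfold Rdiv. ring. }
  assert (Hp'c : ceps a b p') by (apply cont_ceps; exact Hpc).
  assert (Hfin : forall x, a < x < b -> Derive Phi1 x = F x /\ zc x * Phi1 x = d * F x - alpha * Phi1 x /\ 0 < Phi1 x).
  { intros x Hx. split; [apply is_derive_unique, HPd; exact Hx|].
    assert (P0 : 0 < Phi1 x) by (apply Hpos; lra). split; [|exact P0].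
    unfold zc, c. rewrite clamp_id by lra. field. lra. }
  split.
  - intros Hle [x2 [Hx2 Hx2']] x Hx.
    assert (Hneg : zc x < 0).
    { apply (lemmaA a b zc K zd Kd E Hab (fun t _ => Hzc t) Hzd HKd HzK HE Hza Hzb); [| |exact Hx].
      - intros t Ht. unfold Kd. assert (0 < exp (- (alpha / d) * t)) by apply exp_pos.
        assert (p' t <= 0) by (apply Hle; lra). assert (0 <= Phi1 t ^ 2) by nra.
        replace (- exp (- (alpha / d) * t) * p' t * Phi1 t ^ 2) with (exp (- (alpha / d) * t) * ((- p' t) * Phi1 t ^ 2)) by ring.
        apply Rmult_le_pos; [lra|]. apply Rmult_le_pos; lra.
      - destruct (classic (exists x1, a < x1 < b /\ p' x1 < 0)) as [[x1 [H1 H2]]|Hno].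
        + exists x1; split; [exact H1|]. unfold Kd.
          assert (0 < exp (- (alpha / d) * x1)) by apply exp_pos.
          assert (0 < Phi1 x1) by (apply Hpos; lra). assert (0 < Phi1 x1 ^ 2) by nra.
          replace (- exp (- (alpha / d) * x1) * p' x1 * Phi1 x1 ^ 2) with (exp (- (alpha / d) * x1) * ((- p' x1) * Phi1 x1 ^ 2)) by ring.
          apply Rmult_lt_0_compat; [lra|]. apply Rmult_lt_0_compat; lra.
        + exfalso. apply Hx2'. apply (cont_zero_ext a b p' Hab Hp'c); [|exact Hx2].
          intros t Ht. assert (p' t <= 0) by (apply Hle; lra).
          destruct (Req_dec (p' t) 0) as [e|e]; [exact e|]. exfalso; apply Hno. exists t; split; [exact Ht|lra]. }
    destruct (Hfin x Hx) as [-> [Heq P0]]. nra.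
  - intros Hle [x2 [Hx2 Hx2']] x Hx.
    assert (Hneg : - zc x < 0).
    { apply (lemmaA a b (fun t => - zc t) (fun t => - K t) (fun t => - zd t) (fun t => - Kd t) E Hab); [ | | | | exact HE | | | | | exact Hx].
      - intros t _. apply (continuity_pt_opp zc). apply Hzc.
      - intros t Ht. apply (is_derive_opp zc). apply Hzd; exact Ht.
      - intros t Ht. apply (is_derive_opp K). apply HKd; exact Ht.
      - intros t Ht. rewrite HzK by exact Ht. ring.
      - rewrite Hza; ring.
      - rewrite Hzb; ring.
      - intros t Ht. unfold Kd. assert (0 < exp (- (alpha / d) * t)) by apply exp_pos.
        assert (0 <= p' t) by (apply Hle; lra). assert (0 <= Phi1 t ^ 2) by nra.
        replace (- (- exp (- (alpha / d) * t) * p' t * Phi1 t ^ 2)) with (exp (- (alpha / d) * t) * (p' t * Phi1 t ^ 2)) by ring.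
        apply Rmult_le_pos; [lra|]. apply Rmult_le_pos; lra.
      - destruct (classic (exists x1, a < x1 < b /\ 0 < p' x1)) as [[x1 [H1 H2]]|Hno].
        + exists x1; split; [exact H1|]. unfold Kd.
          assert (0 < exp (- (alpha / d) * x1)) by apply exp_pos.
          assert (0 < Phi1 x1) by (apply Hpos; lra). assert (0 < Phi1 x1 ^ 2) by nra.
          replace (- (- exp (- (alpha / d) * x1) * p' x1 * Phi1 x1 ^ 2)) with (exp (- (alpha / d) * x1) * (p' x1 * Phi1 x1 ^ 2)) by ring.
          apply Rmult_lt_0_compat; [lra|]. apply Rmult_lt_0_compat; lra.
        + exfalso. apply Hx2'. apply (cont_zero_ext a b p' Hab Hp'c); [|exact Hx2].
          intros t Ht. assert (0 <= p' t) by (apply Hle; lra).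
          destruct (Req_dec (p' t) 0) as [e|e]; [exact e|]. exfalso; apply Hno. exists t; split; [exact Ht|lra]. }
    destruct (Hfin x Hx) as [-> [Heq P0]]. nra.
Qed.
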